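(* Let $q$ be a prime power and $n\ge 2$. For every integer $r\ge0$ with $r\equiv n\pmod 2$ and $r+2\le n$, we have $c_{r+2}(q,n)<c_r(q,n)$; that is, $c_r(q,n)$ is decreasing in $r$ (over $r$ of the parity of $n$).
   Context: Let ${\mathbb F}_q$ be the finite field of order $q$. A differential on ${\mathbb F}_q^n$ is a linear map $D$ with $D^2=0$; its homology is $\ker D/\operatorname{im}D$, whose dimension has the parity of $n$. $c_r(q,n)$ denotes the number of differentials on ${\mathbb F}_q^n$ whose homology has dimension $r$. *)

(* Defs.v *)
From HB Require Import structures.
From mathcomp Require Import all_boot all_order all_algebra all_fingroup all_field.
Set Implicit Arguments. Unset Strict Implicit. Unset Printing Implicit Defensive.
Import GRing.Theory.
Local Open Scope ring_scope.

Definition is_differential (F : finFieldType) (n : nat) (D : 'M[F]_n) : bool :=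
  D *m D == 0.

(* dim (ker D / im D) = dim ker D - dim im D (im D is contained in ker D
   for a differential). kermx D is the (row) kernel, \rank D = dim im D. *)
Definition homology_dim (F : finFieldType) (n : nat) (D : 'M[F]_n) : nat :=
  (\rank (kermx D) - \rank D)%N.

(* c_r(q,n) with q = #|F| *)
Definition c (F : finFieldType) (r n : nat) : nat :=
  #|[set D : 'M[F]_n | is_differential D && (homology_dim D == r)]|.

(* Main.v *)
Require Import Defs.
From HB Require Import structures.
From mathcomp Require Import all_boot all_order all_algebra all_fingroup all_field.
From mathcomp Require Import zify ring.
Set Implicit Arguments. Unset Strict Implicit. Unset Printing Implicit Defensive.
Import GRing.Theory.

Lemma t (x q s : nat) : 1 <= x -> 2 <= q -> 2 <= s ->
  (x*q - 1) * x < (x*q*s - x) * (x*s - x).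
Proof.
move=> hx hq hs.
have e1 : (x*q*s - x = x * (q*s - 1))%N by rewrite mulnBr muln1 mulnA.
have e2 : (x*s - x = x * (s - 1))%N by rewrite mulnBr muln1.
rewrite e1 e2.
have h1 : ((x*q - 1) * x < x * q * x)%N.
  rewrite mulnBl mul1n ltn_subrL; apply/andP; split; first by [].
  by rewrite muln_gt0 (leq_trans _ hx) // muln_gt0 (leq_trans _ hx) // (leq_trans _ hq).
apply: (leq_trans h1).
have h2 : (q <= q * s - 1)%N by nia.
have h3 : (1 <= s - 1)%N by lia.
apply: leq_mul; first by rewrite leq_mul2l h2 orbT.
by rewrite -{1}(muln1 x) leq_mul2l h3 orbT.
Qed.
Lemma t2 (A B a b d e x q s : nat) :
  d*(x*q*s - x) = (x*q*s - 1)*x*e ->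
  B*((x*q-1)*x*a) = b*(x*(x*q*s) - x)*e*(x*s - x) ->
  A*a = b*d -> 
  B*((x*q-1)*x*(x*q*s-1)*x)*a = A*((x*q*s - x)*(x*(x*q*s)-x)*(x*s-x))*a.
Proof.
move: (x*q*s - x) (x*q*s - 1) (x*q-1) (x*(x*q*s) - x) (x*s - x) => u v w y z.
move=> h1 h2 h3.
have -> : (B * (w * x * v * x) * a = (B * (w * x * a)) * v * x)%N by ring.
rewrite h2.
have -> : (b * y * e * z * v * x = b * y * z * (v * x * e))%N by ring.
rewrite -h1.
have -> : (A * (u * y * z) * a = (A * a) * u * y * z)%N by ring.
rewrite h3; ring.
Qed.
Lemma fin (A B a b d e x q s : nat) : 0 < a -> 0 < b -> 0 < d -> 1 <= x -> 2 <= q -> 2 <= s ->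
  d*(x*q*s - x) = (x*q*s - 1)*x*e ->
  B*((x*q-1)*x*a) = b*(x*(x*q*s) - x)*e*(x*s - x) ->
  A*a = b*d -> A < B.
Proof.
move=> a0 b0 d0 hx hq hs h1 h2 h3.
have E := @t2 A B a b d e x q s h1 h2 h3.
move/eqP: E; rewrite eqn_pmul2r // => /eqP E.
have A0 : 0 < A.
  have : 0 < b * d by rewrite muln_gt0 b0 d0.
  by rewrite -h3 muln_gt0 => /andP[].
have ex : (x*(x*q*s) - x = (x*q*s - 1) * x)%N by rewrite mulnBl mul1n mulnC.
rewrite ex in E.
have c0 : 0 < (x*q*s - 1) * x by rewrite muln_gt0 (leq_trans _ hx) // andbT subn_gt0; nia.
have Pe : ((x*q-1)*x*(x*q*s-1)*x = ((x*q-1)*x) * ((x*q*s-1)*x))%N by ring.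
have Qe : ((x*q*s - x)*((x*q*s-1)*x)*(x*s-x) = ((x*q*s - x)*(x*s-x)) * ((x*q*s-1)*x))%N by ring.
rewrite Pe Qe in E.
have PQ : ((x*q-1)*x) * ((x*q*s-1)*x) < ((x*q*s - x)*(x*s-x)) * ((x*q*s-1)*x).
  by rewrite ltn_pmul2r // t.
rewrite ltnNge; apply/negP => BA.
have : B * (((x*q-1)*x) * ((x*q*s-1)*x)) < A * (((x*q*s - x)*(x*s-x)) * ((x*q*s-1)*x)).
  apply: (leq_ltn_trans (leq_mul BA (leqnn _))).
  by rewrite ltn_pmul2l.
by rewrite E ltnn.
Qed.
Section Counting.
Variable F : finFieldType.
Local Open Scope ring_scope.
Local Notation q := #|F|.

Definition fr k m := #|[pred A : 'M[F]_(k, m) | row_free A]|.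

Lemma fr_rec k m : fr k.+1 m = (fr k m * (q ^ m - q ^ k))%N.
Proof.
rewrite /fr -sum_nat_const /= -sum1_card -add1n.
rewrite (partition_big dsubmx [pred A : 'M[F]_(k,m) | row_free A]) /= => [|A]; last first.
  rewrite !inE /row_free -{1}(vsubmxK A); move: {A}(_ A) (_ A) => Ad Au Afull.
  rewrite eqn_leq rank_leq_row -(leq_add2l (\rank Au)) -mxrank_sum_cap.
  rewrite {1 3}[@mxrank]lock addsmxE (eqnP Afull) -lock -addnA.
  by rewrite leq_add ?rank_leq_row ?leq_addr.
apply: eq_bigr => A rAm; rewrite (reindex (col_mx^~ A)) /=; last first.
  exists usubmx => [v _ | vA]; first by rewrite col_mxKu.
  by case/andP=> _ /eqP <-; rewrite vsubmxK.
transitivity #|~: [set v *m A | v in 'rV_k]|; last first.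
  rewrite cardsCs setCK card_imset ?card_mx ?card_ord ?mul1n //.
  have [B AB1] := row_freeP rAm; apply: can_inj (mulmx^~ B) _ => v.
  by rewrite -mulmxA AB1 mulmx1.
rewrite -sum1_card; apply: eq_bigl => v; rewrite !inE col_mxKd eqxx.
rewrite andbT /row_free eqn_leq rank_leq_row /= -(leq_add2r (\rank (v :&: A)%MS)).
rewrite -addsmxE mxrank_sum_cap (eqnP rAm) addnAC leq_add2r.
rewrite (ltn_leqif (mxrank_leqif_sup _)) ?capmxSl // sub_capmx submx_refl.
by congr (~~ _); apply/submxP/imsetP=> [] [u]; exists u.
Qed.

Lemma fr0 m : fr 0 m = 1%N.
Proof.
rewrite /fr (@eq_card1 _ (0 : 'M_(0, m))) // => A.
by rewrite !inE /row_free [A]flatmx0 mxrank.unlock !eqxx.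
Qed.

Lemma fr_prod k m : fr k m = \prod_(i < k) (q ^ m - q ^ i)%N.
Proof.
elim: k => [|k IH]; first by rewrite fr0 big_ord0.
by rewrite fr_rec IH big_ord_recr.
Qed.

Lemma q_gt1 : (1 < q)%N.
Proof. by rewrite (cardD1 0) (cardD1 1) !inE oner_neq0. Qed.

Lemma fr_gt0 k m : (k <= m)%N -> (0 < fr k m)%N.
Proof.
move=> km; rewrite fr_prod prodn_gt0 // => i.
by rewrite subn_gt0 ltn_exp2l ?q_gt1 // (leq_trans (ltn_ord i)).
Qed.

Lemma fr_shift k m : fr k.+1 m.+1 = ((q ^ m.+1 - 1) * q ^ k * fr k m)%N.
Proof.
rewrite !fr_prod big_ord_recl expn0 -mulnA; congr (_ * _)%N.
have -> : (q ^ k = \prod_(i < k) q)%N by rewrite prod_nat_const card_ord.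
rewrite -big_split /=.
by apply: eq_bigr => i _; rewrite /bump /= mulnBr -!expnS.
Qed.

Lemma rank_unit_mull n p (E : 'M[F]_n) (X : 'M[F]_(n, p)) :
  E \in unitmx -> \rank (E *m X) = \rank X.
Proof.
move=> uE; rewrite -mxrank_tr trmx_mul mxrankMfree ?mxrank_tr //.
by rewrite row_free_unit unitmx_tr.
Qed.

Definition kerCount k n (Y : 'M[F]_(k, n)) :=
  #|[set X : 'M[F]_(n, k) | row_full X && (Y *m X == 0)]|.

Lemma kerCount_std k n (Y : 'M[F]_(k, n)) : row_free Y ->
  kerCount Y = kerCount (pid_mx k : 'M_(k, n)).
Proof.
move=> fY; rewrite /kerCount.
have rY : \rank Y = k by apply/eqP.
set C := col_ebase Y; set E := row_ebase Y.
have uC : C \in unitmx by apply: col_ebase_unit.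
have uE : E \in unitmx by apply: row_ebase_unit.
have eY : Y = C *m pid_mx k *m E by rewrite -{1}(mulmx_ebase Y) rY.
rewrite -(card_preimset _ (can_inj (mulKVmx uE))); apply: eq_card => X.
rewrite !inE /row_full rank_unit_mull ?unitmx_inv // eY -!mulmxA mulKVmx //.
congr (_ && _); apply/eqP/eqP => [h|->]; last by rewrite mulmx0.
by rewrite -(mulKmx uC (pid_mx k *m X)) h mulmx0.
Qed.

Lemma fr_tr k m : #|[set Z : 'M[F]_(m, k) | row_full Z]| = fr k m.
Proof.
rewrite /fr -(card_imset _ (@trmx_inj _ m k)); apply: eq_card => A.
rewrite !inE; apply/imsetP/idP => [[Z] | fA].
  by rewrite inE /row_full => /eqP rZ ->; rewrite /row_free mxrank_tr rZ.
exists A^T; last by rewrite trmxK.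
by rewrite inE /row_full mxrank_tr.
Qed.

Lemma kerCount_pid k m : kerCount (pid_mx k : 'M[F]_(k, k + m)) = fr k m.
Proof.
rewrite /kerCount -fr_tr.
rewrite -(card_imset _ (can_inj (fun Z : 'M[F]_(m, k) => col_mxKd (0 : 'M[F]_(k, k)) Z))).
apply: eq_card => X; rewrite !inE pid_mx_row -[X in row_mx _ _ *m X]vsubmxK.
rewrite mul_row_col mul1mx mul0mx addr0.
apply/andP/imsetP => [[fX /eqP u0] | [Z]].
  exists (dsubmx X); first by rewrite inE /row_full -(rank_col_0mx k) -u0 vsubmxK.
  by rewrite -u0 vsubmxK.
rewrite inE /row_full => fZ ->; rewrite col_mxKu eqxx.
by rewrite rank_col_0mx.
Qed.


Definition Pset k n := [set p : 'M[F]_(k, n) * 'M[F]_(n, k) |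
  [&& row_free p.1, row_full p.2 & p.1 *m p.2 == 0]].

Lemma card_Pset k m : #|Pset k (k + m)| = (fr k (k + m) * fr k m)%N.
Proof.
rewrite -sum1_card.
rewrite (eq_bigl (fun p => row_free p.1 && (row_full p.2 && (p.1 *m p.2 == 0))));
  last by move=> p; rewrite inE.
rewrite -(pair_big_dep (fun Y : 'M[F]_(k, k + m) => row_free Y)
   (fun Y (X : 'M[F]_(k + m, k)) => row_full X && (Y *m X == 0)) (fun _ _ => 1%N)) /=.
rewrite (eq_bigr (fun _ => fr k m)) => [|Y fY]; last first.
  by rewrite sum1_card -kerCount_pid -(kerCount_std fY) /kerCount cardsE.
by rewrite sum_nat_const.
Qed.


Definition Sset k n := [set D : 'M[F]_n | (D *m D == 0) && (\rank D == k)].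

Lemma card_Pset_fiber k n : (k <= n)%N -> #|Pset k n| = (#|Sset k n| * fr k k)%N.
Proof.
move=> kn.
rewrite -sum1_card (partition_big (fun p => p.2 *m p.1) (mem (Sset k n))) /=;
  last first.
  move=> [Y X]; rewrite !inE /= => /and3P[fY fX /eqP YX].
  rewrite mulmxA -(mulmxA X) YX mulmx0 mul0mx eqxx /=.
  by rewrite mxrankMfree.
rewrite -sum_nat_const; apply: eq_bigr => D; rewrite inE => /andP[/eqP DD /eqP rD].
set X0 : 'M[F]_(n, k) := col_ebase D *m pid_mx k.
set Y0 : 'M[F]_(k, n) := pid_mx k *m row_ebase D.
have eD : D = X0 *m Y0.
  rewrite /X0 /Y0 mulmxA -[col_ebase D *m _ *m pid_mx k]mulmxA pid_mx_id //.
  by rewrite -{1}(mulmx_ebase D) rD.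
have fX0 : row_full X0.
  by rewrite /row_full rank_unit_mull ?col_ebase_unit // rank_pid_mx.
have fY0 : row_free Y0.
  by rewrite /row_free mxrankMfree ?row_free_unit ?row_ebase_unit // rank_pid_mx.
clearbody X0 Y0.
have [L LX0] := row_fullP fX0.
have [R Y0R] := row_freeP fY0.
have Y0X0 : Y0 *m X0 = 0.
  have : L *m (D *m D) *m R = 0 by rewrite DD mulmx0 mul0mx.
  by rewrite eD !mulmxA LX0 mul1mx -!mulmxA Y0R mulmx1.
pose f (G : 'M[F]_k) := (invmx G *m Y0, X0 *m G).
rewrite sum1dep_card /fr.
transitivity #|[set f G | G in [pred G : 'M[F]_k | row_free G]]|; last first.
  apply: card_in_imset => G1 G2 _ _ [_ h].
  by rewrite -[G1]mul1mx -LX0 -mulmxA h mulmxA LX0 mul1mx.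
apply: eq_card => p; rewrite !inE.
apply/idP/imsetP => [|[G]]; last first.
  rewrite inE row_free_unit => uG ->; rewrite /f /=.
  rewrite /row_free /row_full rank_unit_mull ?unitmx_inv // (eqP fY0).
  rewrite mxrankMfree ?row_free_unit // (eqP fX0) eqxx /=.
  rewrite mulmxA -(mulmxA _ Y0) Y0X0 mulmx0 mul0mx eqxx /=.
  by rewrite -mulmxA (mulmxA G) mulmxV // mul1mx eD.
case: p => Y X /=; case/andP=> /and3P[fY fX /eqP YX] /eqP XYD.
have [Lx LxX] := row_fullP fX.
have [Ry YRy] := row_freeP fY.
set G := Y0 *m Ry; set H := Lx *m X0.
have eX : X = X0 *m G by rewrite /G mulmxA -eD -XYD -mulmxA YRy mulmx1.
have eY : Y = H *m Y0 by rewrite /H -mulmxA -eD -XYD mulmxA LxX mul1mx.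
have GH : G *m H = 1%:M.
  have : L *m (X *m Y) *m R = 1%:M by rewrite XYD eD mulmxA LX0 mul1mx Y0R.
  by rewrite eX eY !mulmxA LX0 mul1mx -!mulmxA Y0R mulmx1.
have [uG uH] := mulmx1_unit GH.
exists G; first by rewrite inE row_free_unit.
have iG : invmx G = H by rewrite -[H]mul1mx -(mulVmx uG) -mulmxA GH mulmx1.
by rewrite /f eX eY iG.
Qed.


Lemma core k m : (#|Sset k (k + m)| * fr k k = fr k (k + m) * fr k m)%N.
Proof. by rewrite -card_Pset_fiber ?leq_addr // card_Pset. Qed.

Lemma key j r : (#|Sset j (j + (j + r + 2))| < #|Sset j.+1 (j + (j + r + 2))|)%N.
Proof.
set n0 := (j + (j + r + 2))%N.
have c1 := core j (j + r + 2).
have c2 := core j.+1 (j + r + 1).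
rewrite (_ : (j.+1 + (j + r + 1) = n0)%N) in c2; last by rewrite /n0; lia.
have ex : (q ^ (j + r + 2) = q ^ j * q * q ^ r.+1)%N.
  by rewrite -expnSr -expnD; congr (expn _ _); lia.
have e1 := fr_rec j (j + r + 2).
have e2 : fr j.+1 (j + r + 2) = ((q ^ (j + r + 2) - 1) * q ^ j * fr j (j + r + 1))%N.
  by rewrite (_ : (j + r + 2 = (j + r + 1).+1)%N) ?fr_shift //; lia.
have e3 := fr_rec j n0.
have e4 := fr_rec j (j + r + 1).
have e5 : fr j.+1 j.+1 = ((q ^ j.+1 - 1) * q ^ j * fr j j)%N by rewrite fr_shift.
apply: (@fin _ _ (fr j j) (fr j n0) (fr j (j + r + 2)) (fr j (j + r + 1))
   (q ^ j) q (q ^ r.+1)).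
- by rewrite fr_gt0.
- by rewrite fr_gt0 // /n0; lia.
- by rewrite fr_gt0 //; lia.
- by rewrite expn_gt0 (ltnW q_gt1).
- exact: q_gt1.
- by rewrite expnS (leq_trans q_gt1) // leq_pmulr // expn_gt0 (ltnW q_gt1).
- by rewrite -ex -e1 e2 ex.
- have -> : (q ^ j * (q ^ j * q * q ^ r.+1) = q ^ n0)%N.
    by rewrite -ex -expnD /n0.
  have -> : (q ^ j * q ^ r.+1 = q ^ (j + r + 1))%N by rewrite -expnD; congr (expn _ _); lia.
  by rewrite -expnSr -e5 c2 e3 e4; ring.
- by rewrite c1.
Qed.

End Counting.

Lemma c_S (F : finFieldType) r k n : n = (r + k + k)%N -> c F r n = #|Sset F k n|.
Proof.
move=> hn; rewrite /c; apply: eq_card => D; rewrite !inE /is_differential /homology_dim mxrank_ker.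
case DD: (D *m D == 0)%R => //=.
have h : (\rank D <= n - \rank D)%N by rewrite -mxrank_ker mxrankS // sub_kermx.
apply/eqP/eqP; lia.
Qed.

Theorem mainTheorem7 (F : finFieldType) (n r : nat) :
  (2 <= n)%N -> odd r = odd n -> (r + 2 <= n)%N ->
  (c F (r + 2) n < c F r n)%N.
Proof.
move=> n2 odd_eq le.
have ev : ~~ odd (n - r).
  by rewrite oddB ?(leq_trans _ le) ?leq_addr // odd_eq addbb.
have := odd_double_half (n - r); rewrite (negbTE ev) add0n -addnn => hnr.
set h := (n - r)./2 in hnr.
have hj : n = ((h.-1) + ((h.-1) + r + 2))%N by lia.
rewrite (@c_S F (r + 2) h.-1 n); last by lia.
rewrite (@c_S F r h.-1.+1 n); last by lia.
rewrite hj; exact: key.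
Qed.
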